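(* Let $d\ge2$, let $Q$ be a qplex, and let $r$ be a type-preserving measurement for $Q$ with stretched measurement matrix $R$. Then $R$ is an orthogonal $d^2\times d^2$ matrix with $Rc=c$. Moreover there exist points $s_1,\dots,s_{d^2}\in Q\cap S_{\rm o}$ which are the vertices of a regular simplex and satisfy, for all $i,j$, $$R_{ij}=(d+1)s_i(j)-\frac1d,\qquad Rs_i=e_i,\qquad (Re_i)(j)=s_j(i).$$
   Context: Fix an integer $d\ge 2$. $\langle\cdot,\cdot\rangle$ is the standard inner product on $\mathbb{R}^{d^2}$, $\|\cdot\|$ the Euclidean norm. $\Delta=\{p\in\mathbb{R}^{d^2}: p(i)\ge0,\ \sum_ip(i)=1\}$; $H=\{u\in\mathbb{R}^{d^2}:\sum_i u(i)=1\}$; $c=(1/d^2,\dots,1/d^2)$. For $A\subseteq H$ the polar is $A^*=\{u\in H:\langle u,v\rangle\ge\frac{1}{d(d+1)}\ \forall v\in A\}$. Out-ball $B_{\rm o}=\{u\in H:\|u-c\|\le r_{\rm o}\}$, $r_{\rm o}^2=\frac{d-1}{d^2(d+1)}$, boundary sphere $S_{\rm o}$. Basis distributions $e_k(i)=\frac{1}{d+1}(\delta_{ki}+\frac1d)$. A qplex is a set $Q\subseteq\Delta\cap B_{\rm o}$ with $Q^*=Q$. A measurement (with $d^2$ outcomes) is an array of reals $r(i|j)\ge0$, $i,j\in\{1,\dots,d^2\}$, with $\sum_i r(i|j)=1$ for every $j$. For a qplex $Q$ and $q\in Q$, define $q_r(i)=\sum_j\big[(d+1)q(j)-\frac1d\big]r(i|j)$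 and $Q_r=\{q_r:q\in Q\}$. The measurement is type-preserving for $Q$ if $Q_r$ is a qplex, and $Q$-preserving if $Q_r=Q$. Its stretched measurement matrix is $R_{ij}=(d+1)r(i|j)-\frac1d\sum_k r(i|k)$, so that $q_r=Rq$. Points $s_1,\dots,s_{d^2}$ are vertices of a regular simplex if they are distinct and all pairwise distances $\|s_i-s_j\|$, $i\ne j$, are equal. *)

(* Defs.v *)
(* classical reals.  Vectors in R^{d^2} are functions nat -> R,
   only indices 0 .. d*d-1 are meaningful (0-based indexing). *)
From Stdlib Require Import Reals.
Open Scope R_scope.

Fixpoint fsum (n : nat) (f : nat -> R) : R :=
  match n with
  | O => 0
  | S k => fsum k f + f k
  end.

Definition vec := nat -> R.
Definition nsq (d : nat) : nat := (d * d)%nat.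
Definition dR (d : nat) : R := INR d.

Definition inner (d : nat) (u v : vec) : R := fsum (nsq d) (fun i => u i * v i).
Definition dist2 (d : nat) (u v : vec) : R :=
  fsum (nsq d) (fun i => (u i - v i) * (u i - v i)).

Definition inDelta (d : nat) (p : vec) : Prop :=
  (forall i, (i < nsq d)%nat -> 0 <= p i) /\ fsum (nsq d) p = 1.
Definition inH (d : nat) (u : vec) : Prop := fsum (nsq d) u = 1.
Definition cvec (d : nat) : vec := fun _ => 1 / (dR d * dR d).

Definition polar (d : nat) (A : vec -> Prop) : vec -> Prop :=
  fun u => inH d u /\ forall v, A v -> inner d u v >= 1 / (dR d * (dR d + 1)).

Definition ro2 (d : nat) : R := (dR d - 1) / (dR d * dR d * (dR d + 1)).
Definition inBo (d : nat) (u : vec) : Prop := inH d u /\ dist2 d u (cvec d) <= ro2 d.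
Definition inSo (d : nat) (u : vec) : Prop := inH d u /\ dist2 d u (cvec d) = ro2 d.

Definition ebasis (d : nat) (k : nat) : vec :=
  fun i => (1 / (dR d + 1)) * ((if Nat.eqb k i then 1 else 0) + 1 / dR d).

Definition qplex (d : nat) (Q : vec -> Prop) : Prop :=
  (forall q, Q q -> inDelta d q /\ inBo d q) /\
  (forall u, polar d Q u <-> Q u).

(* measurement: r i j = r(i|j) *)
Definition measurement (d : nat) (r : nat -> nat -> R) : Prop :=
  (forall i j, (i < nsq d)%nat -> (j < nsq d)%nat -> 0 <= r i j) /\
  (forall j, (j < nsq d)%nat -> fsum (nsq d) (fun i => r i j) = 1).

Definition qr (d : nat) (r : nat -> nat -> R) (q : vec) : vec :=
  fun i => fsum (nsq d) (fun j => ((dR d + 1) * q j - 1 / dR d) * r i j).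

(* Q_r = { q_r : q in Q }, vectors identified when they agree on indices < d^2 *)
Definition Qr (d : nat) (Q : vec -> Prop) (r : nat -> nat -> R) : vec -> Prop :=
  fun u => exists q, Q q /\ forall i, (i < nsq d)%nat -> u i = qr d r q i.

Definition type_preserving (d : nat) (Q : vec -> Prop) (r : nat -> nat -> R) : Prop :=
  qplex d (Qr d Q r).

Definition Rmat (d : nat) (r : nat -> nat -> R) (i j : nat) : R :=
  (dR d + 1) * r i j - (1 / dR d) * fsum (nsq d) (fun k => r i k).

Definition mxvec (d : nat) (M : nat -> nat -> R) (v : vec) : vec :=
  fun i => fsum (nsq d) (fun j => M i j * v j).

Definition orthogonal (d : nat) (M : nat -> nat -> R) : Prop :=
  forall i j, (i < nsq d)%nat -> (j < nsq d)%nat ->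
    fsum (nsq d) (fun k => M k i * M k j) = if Nat.eqb i j then 1 else 0.

Definition regular_simplex (d : nat) (s : nat -> vec) : Prop :=
  (forall i j, (i < nsq d)%nat -> (j < nsq d)%nat -> i <> j ->
     exists k, (k < nsq d)%nat /\ s i k <> s j k) /\
  (exists delta, forall i j, (i < nsq d)%nat -> (j < nsq d)%nat -> i <> j ->
     sqrt (dist2 d (s i) (s j)) = delta).

(* Main.v *)
Require Import Defs.
From Stdlib Require Import Reals Lra Lia Psatz.
From Stdlib Require Import IndefiniteDescription Classical.
Open Scope R_scope.

Lemma fsum_ext n f g : (forall i, (i < n)%nat -> f i = g i) -> fsum n f = fsum n g.
Proof. induction n; simpl; intros H; auto. rewrite IHn by (intros; apply H; lia). rewrite H by lia. auto. Qed.

Lemma fsum_plus n f g : fsum n (fun i => f i + g i) = fsum n f + fsum n g.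
Proof. induction n; simpl; [lra| rewrite IHn; lra]. Qed.
Lemma fsum_minus n f g : fsum n (fun i => f i - g i) = fsum n f - fsum n g.
Proof. induction n; simpl; [lra| rewrite IHn; lra]. Qed.
Lemma fsum_scal n c f : fsum n (fun i => c * f i) = c * fsum n f.
Proof. induction n; simpl; [lra| rewrite IHn; lra]. Qed.
Lemma fsum_const n c : fsum n (fun _ => c) = INR n * c.
Proof. induction n; simpl fsum; [simpl; lra|]. rewrite S_INR, IHn; lra. Qed.
Lemma fsum_0 n f : (forall i, (i<n)%nat -> f i = 0) -> fsum n f = 0.
Proof. intros H. rewrite (fsum_ext n f (fun _ => 0)) by auto. rewrite fsum_const; lra. Qed.
Lemma fsum_nonneg n f : (forall i, (i<n)%nat -> 0 <= f i) -> 0 <= fsum n f.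
Proof. induction n; simpl; intros H; [lra|]. assert (0 <= f n) by (apply H; lia).
  assert (0 <= fsum n f) by (apply IHn; intros; apply H; lia). lra. Qed.
Lemma fsum_le n f g : (forall i, (i<n)%nat -> f i <= g i) -> fsum n f <= fsum n g.
Proof. induction n; simpl; intros H; [lra|]. assert (f n <= g n) by (apply H; lia).
  assert (fsum n f <= fsum n g) by (apply IHn; intros; apply H; lia). lra. Qed.
Lemma fsum_zero n f : (forall i, (i<n)%nat -> 0 <= f i) -> fsum n f = 0 ->
  forall i, (i<n)%nat -> f i = 0.
Proof. induction n; simpl; intros H E i Hi; [lia|].
  assert (0 <= f n) by (apply H; lia).
  assert (0 <= fsum n f) by (apply fsum_nonneg; intros; apply H; lia).
  destruct (Nat.eq_dec i n). subst; lra.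
  apply IHn; [intros; apply H; lia| lra | lia]. Qed.
Lemma fsum_delta n k f : (k<n)%nat ->
  fsum n (fun i => (if Nat.eqb k i then 1 else 0) * f i) = f k.
Proof. induction n; intros Hk; [lia|]. simpl. destruct (Nat.eqb_spec k n).
  - subst. rewrite fsum_0; [lra|]. intros i Hi. destruct (Nat.eqb_spec n i); [lia|lra].
  - rewrite IHn by lia. lra. Qed.
Lemma fsum_swap n m f : fsum n (fun i => fsum m (fun j => f i j)) = fsum m (fun j => fsum n (fun i => f i j)).
Proof. induction n; simpl. - symmetry; apply fsum_0; auto.
  - rewrite IHn, <- fsum_plus. reflexivity. Qed.
Lemma fsum_mul n m f g : fsum n f * fsum m g = fsum n (fun i => fsum m (fun j => f i * g j)).
Proof. rewrite (Rmult_comm (fsum n f)), <- fsum_scal. apply fsum_ext; intros.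
  rewrite Rmult_comm, <- fsum_scal. apply fsum_ext; intros; ring. Qed.

Lemma dR_ge2 d : (2 <= d)%nat -> 2 <= dR d.
Proof. intros. unfold dR. replace 2 with (INR 2) by (simpl; lra). apply le_INR; lia. Qed.
Lemma INR_nsq d : INR (nsq d) = dR d * dR d.
Proof. unfold nsq, dR. apply mult_INR. Qed.

Lemma ebasis_sum d k : (2<=d)%nat -> (k < nsq d)%nat -> fsum (nsq d) (ebasis d k) = 1.
Proof. intros Hd Hk. pose proof (dR_ge2 d Hd). unfold ebasis.
  rewrite (fsum_ext _ _ (fun i => (1/(dR d+1)) * ((if Nat.eqb k i then 1 else 0) * 1) + (1/(dR d * (dR d+1)))))
    by (intros; field; lra).
  rewrite fsum_plus, fsum_scal, fsum_delta, fsum_const, INR_nsq by auto. field; lra. Qed.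

Lemma ebasis_inner d k v : (2<=d)%nat -> (k < nsq d)%nat ->
  inner d (ebasis d k) v = (1/(dR d+1)) * v k + (1/(dR d * (dR d+1))) * fsum (nsq d) v.
Proof. intros Hd Hk. pose proof (dR_ge2 d Hd). unfold inner, ebasis.
  rewrite (fsum_ext _ _ (fun i => (1/(dR d+1)) * ((if Nat.eqb k i then 1 else 0) * v i) + (1/(dR d * (dR d+1))) * v i))
    by (intros; field; lra).
  rewrite fsum_plus, !fsum_scal, fsum_delta by auto. reflexivity. Qed.

Lemma ebasis_in d Q' k : (2<=d)%nat -> qplex d Q' -> (k < nsq d)%nat -> Q' (ebasis d k).
Proof. intros Hd [Hin Hpol] Hk. pose proof (dR_ge2 d Hd). apply Hpol. split.
  - apply ebasis_sum; auto.
  - intros v Hv. destruct (Hin v Hv) as [[Hpos Hs] _]. rewrite ebasis_inner, Hs by auto.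
    assert (0 <= v k) by auto. apply Rle_ge.
    assert (0 <= 1/(dR d+1) * v k). { apply Rmult_le_pos; auto. apply Rlt_le, Rdiv_lt_0_compat; lra. }
    replace (1 / (dR d * (dR d + 1))) with (1 / (dR d * (dR d + 1)) * 1) at 1 by ring. lra. Qed.

Lemma qr_expand d r q i : (2<=d)%nat ->
  qr d r q i = (dR d + 1) * fsum (nsq d) (fun j => q j * r i j) - 1 / dR d * fsum (nsq d) (fun j => r i j).
Proof. intros. unfold qr. rewrite <- !fsum_scal, <- fsum_minus. apply fsum_ext; intros; ring. Qed.

Lemma qr_ebasis d r k i : (2<=d)%nat -> (k < nsq d)%nat -> qr d r (ebasis d k) i = r i k.
Proof. intros Hd Hk. pose proof (dR_ge2 d Hd). unfold qr, ebasis.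
  rewrite (fsum_ext _ _ (fun j => (if Nat.eqb k j then 1 else 0) * r i j)) by (intros; field; lra).
  apply fsum_delta; auto. Qed.

Lemma dist2_c d u : (2<=d)%nat -> fsum (nsq d) u = 1 ->
  dist2 d u (cvec d) = fsum (nsq d) (fun i => u i * u i) - 1/(dR d * dR d).
Proof. intros Hd Hs. pose proof (dR_ge2 d Hd). unfold dist2, cvec.
  rewrite (fsum_ext _ _ (fun i => u i * u i + (-2/(dR d * dR d)) * u i + (1/(dR d*dR d) * (1/(dR d*dR d)))))
    by (intros; field; lra).
  rewrite !fsum_plus, fsum_scal, fsum_const, INR_nsq, Hs. field; lra. Qed.

Lemma inBo_norm d u : (2<=d)%nat -> inBo d u -> fsum (nsq d) (fun i => u i * u i) <= 2/(dR d * (dR d + 1)).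
Proof. intros Hd [Hs Hb]. pose proof (dR_ge2 d Hd). rewrite dist2_c in Hb by auto.
  unfold ro2 in Hb. assert (2/(dR d * (dR d + 1)) = (dR d - 1) / (dR d * dR d * (dR d + 1)) + 1/(dR d * dR d)) by (field; lra).
  lra. Qed.

Lemma key d (Hd : (2 <= d)%nat) (Q : vec -> Prop) (HQ : qplex d Q)
  (r : nat -> nat -> R) (Hr : measurement d r) (Htp : type_preserving d Q r) :
  exists s : nat -> vec,
    (forall k, (k < nsq d)%nat -> Q (s k) /\ forall i, (i < nsq d)%nat -> ebasis d k i = qr d r (s k) i) /\
    (forall k j, (k < nsq d)%nat -> (j < nsq d)%nat -> s k j = r k j).
Proof.
  pose proof (dR_ge2 d Hd) as HD.
  destruct Hr as [Hrpos Hrcol].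
  assert (Hex : forall k, exists q, (k < nsq d)%nat -> Q q /\ forall i, (i < nsq d)%nat -> ebasis d k i = qr d r q i).
  { intros k. destruct (Nat.lt_ge_cases k (nsq d)) as [Hk|Hk].
    - destruct (ebasis_in d _ k Hd Htp Hk) as [q [Hq Hqi]]. exists q; auto.
    - exists (fun _ => 0); intros; lia. }
  destruct (functional_choice _ Hex) as [s Hs].
  exists s. split; [exact Hs|].
  pose proof HQ as HQq. destruct HQ as [HQin _]. pose proof Htp as Htpq. destruct Htp as [HQrin _].
  assert (Hcol : forall j, (j < nsq d)%nat -> fsum (nsq d) (fun i => r i j * r i j) <= 2/(dR d * (dR d + 1))).
  { intros j Hj. apply (inBo_norm d (fun i => r i j) Hd). refine (proj2 (HQrin (fun i => r i j) _)).
    exists (ebasis d j). split. apply ebasis_in; auto. intros i Hi. rewrite qr_ebasis; auto. }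
  assert (Hsn : forall k, (k < nsq d)%nat -> fsum (nsq d) (fun i => s k i * s k i) <= 2/(dR d * (dR d + 1))).
  { intros k Hk. apply inBo_norm; auto. apply (proj2 (HQin _ (proj1 (Hs k Hk)))). }
  assert (HX : forall k, (k < nsq d)%nat -> fsum (nsq d) (fun j => s k j * r k j) =
      1/(dR d + 1) * (1/dR d) + 1/(dR d * (dR d + 1)) * fsum (nsq d) (fun j => r k j)).
  { intros k Hk. destruct (Hs k Hk) as [_ Hk2]. specialize (Hk2 k Hk).
    rewrite qr_expand in Hk2 by auto. unfold ebasis in Hk2. rewrite Nat.eqb_refl in Hk2.
    apply (Rmult_eq_reg_l (dR d + 1)); [|lra].
    replace ((dR d + 1) * (1 / (dR d + 1) * (1 / dR d) + 1 / (dR d * (dR d + 1)) * fsum (nsq d) (fun j : nat => r k j)))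
     with (1/dR d + 1/dR d * fsum (nsq d) (fun j : nat => r k j)) by (field; lra).
    assert (1 / (dR d + 1) * (1 + 1 / dR d) = 1/dR d) by (field; lra). lra. }
  assert (HRtot : fsum (nsq d) (fun k => fsum (nsq d) (fun j => r k j)) = dR d * dR d).
  { rewrite fsum_swap. rewrite (fsum_ext _ _ (fun _ => 1)) by (intros; apply Hrcol; auto).
    rewrite fsum_const, INR_nsq; ring. }
  assert (HXtot : fsum (nsq d) (fun k => fsum (nsq d) (fun j => s k j * r k j)) = 2 * dR d / (dR d + 1)).
  { rewrite (fsum_ext _ _ _ HX), fsum_plus, fsum_const, fsum_scal, HRtot, INR_nsq. field; lra. }
  set (SS := fsum (nsq d) (fun k => fsum (nsq d) (fun j => (s k j - r k j) * (s k j - r k j)))).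
  assert (HS : SS <= 0).
  { unfold SS. rewrite (fsum_ext _ _ (fun k => fsum (nsq d) (fun j => s k j * s k j) + (-2) * fsum (nsq d) (fun j => s k j * r k j)
        + fsum (nsq d) (fun j => r k j * r k j))).
    2:{ intros k Hk. rewrite <- fsum_scal, <- !fsum_plus. apply fsum_ext; intros; ring. }
    rewrite !fsum_plus, fsum_scal, HXtot.
    rewrite (fsum_swap _ _ (fun k j => r k j * r k j)).
    assert (fsum (nsq d) (fun k => fsum (nsq d) (fun j => s k j * s k j)) <= fsum (nsq d) (fun _ => 2/(dR d * (dR d + 1))))
      by (apply fsum_le; auto).
    assert (fsum (nsq d) (fun j => fsum (nsq d) (fun k => r k j * r k j)) <= fsum (nsq d) (fun _ => 2/(dR d * (dR d + 1))))
      by (apply fsum_le; auto).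
    rewrite fsum_const, INR_nsq in H, H0.
    assert (dR d * dR d * (2 / (dR d * (dR d + 1))) = 2 * dR d / (dR d + 1)) by (field; lra).
    lra. }
  assert (HS0 : SS = 0).
  { apply Rle_antisym; auto. unfold SS. apply fsum_nonneg; intros. apply fsum_nonneg; intros. apply Rle_0_sqr. }
  intros k j Hk Hj.
  assert (E1 := fsum_zero _ _ (fun k _ => fsum_nonneg _ _ (fun j _ => Rle_0_sqr (s k j - r k j))) HS0 k Hk).
  assert (E2 := fsum_zero _ _ (fun j _ => Rle_0_sqr (s k j - r k j)) E1 j Hj).
  cbv beta in E2. apply Rsqr_0_uniq in E2. lra.
Qed.

Lemma quad n (A : nat -> nat -> R) :
  fsum n (fun i => fsum n (fun j => fsum n (fun k => A k i * A k j) * fsum n (fun l => A l i * A l j))) =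
  fsum n (fun k => fsum n (fun l => fsum n (fun i => A k i * A l i) * fsum n (fun j => A k j * A l j))).
Proof.
  transitivity (fsum n (fun i => fsum n (fun j => fsum n (fun k => fsum n (fun l => A k i * A k j * (A l i * A l j)))))).
  { apply fsum_ext; intros i _. apply fsum_ext; intros j _. apply fsum_mul. }
  transitivity (fsum n (fun i => fsum n (fun k => fsum n (fun j => fsum n (fun l => A k i * A k j * (A l i * A l j)))))).
  { apply fsum_ext; intros i _. apply fsum_swap. }
  rewrite fsum_swap.
  transitivity (fsum n (fun k => fsum n (fun i => fsum n (fun l => fsum n (fun j => A k i * A k j * (A l i * A l j)))))).
  { apply fsum_ext; intros k _. apply fsum_ext; intros i _. apply fsum_swap. }
  apply fsum_ext; intros k _. rewrite fsum_swap. apply fsum_ext; intros l _.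
  rewrite fsum_mul. apply fsum_ext; intros i _. apply fsum_ext; intros j _. ring.
Qed.

Lemma orth_of_rows n (A : nat -> nat -> R) :
  (forall k i, (k < n)%nat -> (i < n)%nat -> fsum n (fun l => A k l * A i l) = if Nat.eqb k i then 1 else 0) ->
  forall i j, (i < n)%nat -> (j < n)%nat -> fsum n (fun k => A k i * A k j) = if Nat.eqb i j then 1 else 0.
Proof.
  intros Hrow.
  set (G := fun i j => fsum n (fun k => A k i * A k j)).
  set (dl := fun i j : nat => if Nat.eqb i j then 1 else 0).
  assert (HF : fsum n (fun i => fsum n (fun j => (G i j - dl i j) * (G i j - dl i j))) = 0).
  { rewrite (fsum_ext _ _ (fun i => fsum n (fun j => G i j * G i j) + (-2) * fsum n (fun j => dl i j * G i j)
        + fsum n (fun j => dl i j * dl i j))).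
    2:{ intros i _. rewrite <- fsum_scal, <- !fsum_plus. apply fsum_ext; intros; ring. }
    rewrite !fsum_plus, fsum_scal.
    unfold G at 1 2. rewrite quad.
    rewrite (fsum_ext _ _ (fun k => fsum n (fun l => dl k l * dl k l))).
    2:{ intros k Hk. apply fsum_ext; intros l Hl. rewrite !Hrow by auto. reflexivity. }
    rewrite (fsum_ext _ (fun i => fsum n (fun j => dl i j * G i j)) (fun i => G i i)).
    2:{ intros i Hi. unfold dl. apply fsum_delta; auto. }
    rewrite (fsum_ext _ (fun i => fsum n (fun j => dl i j * dl i j)) (fun _ => 1)).
    2:{ intros i Hi. unfold dl at 1. rewrite fsum_delta by auto. unfold dl. rewrite Nat.eqb_refl; auto. }
    unfold G. rewrite (fsum_swap _ _ (fun i k => A k i * A k i)).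
    rewrite (fsum_ext _ (fun k => fsum n (fun i => A k i * A k i)) (fun _ => 1)).
    2:{ intros k Hk. rewrite Hrow, Nat.eqb_refl; auto. }
    rewrite fsum_const. ring. }
  intros i j Hi Hj.
  assert (E1 := fsum_zero _ _ (fun i _ => fsum_nonneg _ _ (fun j _ => Rle_0_sqr (G i j - dl i j))) HF i Hi).
  assert (E2 := fsum_zero _ _ (fun j _ => Rle_0_sqr (G i j - dl i j)) E1 j Hj).
  cbv beta in E2. apply Rsqr_0_uniq in E2. unfold G, dl in E2. lra.
Qed.

Theorem mainTheorem10 (d : nat) (Hd : (2 <= d)%nat)
  (Q : vec -> Prop) (HQ : qplex d Q)
  (r : nat -> nat -> R) (Hr : measurement d r) (Htp : type_preserving d Q r) :
  orthogonal d (Rmat d r) /\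
  (forall i, (i < nsq d)%nat -> mxvec d (Rmat d r) (cvec d) i = cvec d i) /\
  exists s : nat -> vec,
    (forall i, (i < nsq d)%nat -> Q (s i) /\ inSo d (s i)) /\
    regular_simplex d s /\
    (forall i j, (i < nsq d)%nat -> (j < nsq d)%nat ->
       Rmat d r i j = (dR d + 1) * s i j - 1 / dR d /\
       mxvec d (Rmat d r) (s i) j = ebasis d i j /\
       mxvec d (Rmat d r) (ebasis d i) j = s j i).
Proof.
  pose proof (dR_ge2 d Hd) as HD.
  destruct (key d Hd Q HQ r Hr Htp) as [s [Hs Hsr]].
  pose proof HQ as [HQin _].
  destruct Hr as [Hrpos Hrcol].
  assert (Hssum : forall k, (k < nsq d)%nat -> fsum (nsq d) (s k) = 1).
  { intros k Hk. apply (proj1 (HQin _ (proj1 (Hs k Hk)))). }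
  assert (Hrow : forall k, (k < nsq d)%nat -> fsum (nsq d) (fun j => r k j) = 1).
  { intros k Hk. rewrite <- (Hssum k Hk). apply fsum_ext; intros; symmetry; auto. }
  assert (HRm : forall i j, (i < nsq d)%nat -> (j < nsq d)%nat -> Rmat d r i j = (dR d + 1) * s i j - 1 / dR d).
  { intros i j Hi Hj. unfold Rmat. rewrite Hrow, Hsr by auto. ring. }
  assert (HP : forall i j, (i < nsq d)%nat -> (j < nsq d)%nat ->
     fsum (nsq d) (fun l => s i l * s j l) = (ebasis d i j + 1 / dR d) / (dR d + 1)).
  { intros i j Hi Hj. rewrite ((proj2 (Hs i Hi)) j Hj), qr_expand, Hrow by auto.
    rewrite (fsum_ext _ (fun l => s i l * s j l) (fun l => s i l * r j l)) by (intros; rewrite (Hsr j); auto).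
    field; lra. }
  assert (Heb : forall i j, ebasis d i j = 1/(dR d + 1) * ((if Nat.eqb i j then 1 else 0) + 1/dR d)) by reflexivity.
  assert (Hmxs : forall i j, (i < nsq d)%nat -> (j < nsq d)%nat -> mxvec d (Rmat d r) (s i) j = ebasis d i j).
  { intros i j Hi Hj. unfold mxvec.
    rewrite (fsum_ext _ _ (fun l => (dR d + 1) * (s i l * s j l) + (- 1/dR d) * s i l)).
    2:{ intros l Hl. rewrite HRm by auto. field; lra. }
    rewrite fsum_plus, !fsum_scal, HP, Hssum by auto. field; lra. }
  split.
  {
    unfold orthogonal. apply orth_of_rows.
    intros k i Hk Hi.
    rewrite (fsum_ext _ _ (fun l => (dR d + 1) * (dR d + 1) * (s k l * s i l) + (-(dR d + 1)/dR d) * s k l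
          + (-(dR d + 1)/dR d) * s i l + 1 / (dR d * dR d))).
    2:{ intros l Hl. rewrite !HRm by auto. field; lra. }
    rewrite !fsum_plus, !fsum_scal, fsum_const, INR_nsq, HP, !Hssum, Heb by auto.
    field; lra. }
  split.
  { intros i Hi. unfold mxvec, cvec.
    rewrite (fsum_ext _ _ (fun l => (dR d + 1) / (dR d * dR d) * s i l + (- 1 / (dR d * dR d * dR d)))).
    2:{ intros l Hl. rewrite HRm by auto. field; lra. }
    rewrite fsum_plus, fsum_scal, fsum_const, INR_nsq, Hssum by auto. field; lra. }
  exists s. split; [|split].
  - intros i Hi. split; [apply Hs; auto|]. split; [apply Hssum; auto|].
    rewrite dist2_c by auto. rewrite (HP i i Hi Hi), Heb, Nat.eqb_refl. unfold ro2. field; lra.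
  - split.
    + intros i j Hi Hj Hij. apply NNPP. intros Hn.
      assert (Hall : forall k, (k < nsq d)%nat -> s i k = s j k).
      { intros k Hk. apply NNPP. intros Hne. apply Hn. exists k; auto. }
      assert (E : mxvec d (Rmat d r) (s i) i = mxvec d (Rmat d r) (s j) i).
      { unfold mxvec. apply fsum_ext. intros l Hl. rewrite Hall; auto. }
      rewrite !Hmxs, !Heb, Nat.eqb_refl in E by auto.
      destruct (Nat.eqb_spec j i); [lia|].
      assert (0 < 1 / (dR d + 1)) by (apply Rdiv_lt_0_compat; lra). nra.
    + exists (sqrt (2 / ((dR d + 1) * (dR d + 1)))). intros i j Hi Hj Hij. f_equal.
      unfold dist2.
      rewrite (fsum_ext _ _ (fun l => s i l * s i l + (-2) * (s i l * s j l) + s j l * s j l)) by (intros; ring).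
      rewrite !fsum_plus, fsum_scal, !HP, !Heb, !Nat.eqb_refl by auto.
      destruct (Nat.eqb_spec i j); [lia|]. field; lra.
  - intros i j Hi Hj. split; [auto|split; [auto|]].
    unfold mxvec. rewrite Hsr by auto.
    rewrite (fsum_ext _ _ (fun l => (if Nat.eqb i l then 1 else 0) * (r j l - 1/(dR d * (dR d + 1)))
           + (1/dR d * r j l + (- 1 / (dR d * dR d * (dR d + 1)))))).
    2:{ intros l Hl. rewrite HRm, Hsr, Heb by auto. field; lra. }
    rewrite fsum_plus, fsum_delta, fsum_plus, fsum_scal, fsum_const, INR_nsq, Hrow by auto.
    field; lra.
Qed.
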